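(* Let $\mathbf M$ be an $(N+1,k)$-admissible and micro-reversible matrix, with $Q$-process kernel $\mathbf K$ and stationary measure $\boldsymbol\pi$ (indices $i=0,\dots,N-k$). Let $\phi:\mathbb R^+\to\mathbb R$ be differentiable and convex, let $G_\phi(\mathbf Q|\boldsymbol\pi):=\sum_{i=0}^{N-k}\phi(Q_i)\pi_i$, and let $\mathbf Q(t)=\mathbf q(t)/\boldsymbol\pi$, with $\mathbf q(t)$ a probability vector, solve $\frac{d\mathbf Q}{dt}=(\mathbf K-\mathbf I)\mathbf Q$. Then $$\frac{d}{dt}G_\phi(\mathbf Q|\boldsymbol\pi)=-\frac12\sum_{i,j=0}^{N-k}K_{ij}\,\beta(Q_i,Q_j)\big(\phi'(Q_j)-\phi'(Q_i)\big)\big(\log Q_j-\log Q_i\big)\pi_i\le0.$$ Moreover, if $\phi$ is locally strongly convex in the sense that for every $M>0$ there is $c_M>0$ with $\phi''(x)\ge c_M$ for $x\in[0,M]$, then there exists $C>0$ depending only on $\phi$ and $\boldsymbol\pi$ such that $$\frac{d}{dt}G_\phi(\mathbf Q|\boldsymbol\pi)\le-C\Big|\frac{d\mathbf Q}{dt}\Big|_{\boldsymbol\pi}^2\le0,\qquad |\mathbf a|_{\boldsymbol\pi}^2:=\sum_ia_i^2\pi_i.$$ Furthermore, if $\phi(x)\ge x-1$ for all $x\ge0$, then $G_\phi(\mathbf Q|\boldsymbol\pi)\ge0$.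
   Context: Column-stochastic matrices; $\dagger$ transpose, $\circ$ entrywise product. For $1\le k<N-1$, an $(N+1)\times(N+1)$ column-stochastic $\mathbf M$ is $(N+1,k)$-admissible if, after a simultaneous permutation of rows and columns, $\mathbf M=\begin{pmatrix}\widetilde{\mathbf M}&\mathbf 0\\ \mathbf A&\mathbf I\end{pmatrix}$ with $\mathbf I$ the $k\times k$ identity, $\widetilde{\mathbf M}$ irreducible of size $N+1-k$ (the core) and $\mathbf A$ with no zero row. Its characteristic triple $(\mu,\widetilde{\mathbf w},\widetilde{\mathbf z})$: $\mu=\rho(\widetilde{\mathbf M})\in(0,1)$ and $\widetilde{\mathbf w},\widetilde{\mathbf z}$ the positive left/right eigenvectors for $\mu$, normalised by $\langle\widetilde{\mathbf w},\mathbf 1\rangle=\langle\widetilde{\mathbf w},\widetilde{\mathbf z}\rangle=1$. $\mathbf M$ is micro-reversible if $\widetilde w_i\widetilde M_{ij}\widetilde z_j=\widetilde w_j\widetilde M_{ji}\widetilde z_i$ for all $i,j$. The $Q$-process kernel is $\mathbf K=\frac1\mu\operatorname{diag}(\widetilde{\mathbf w})^{-1}\widetilde{\mathbf M}^\dagger\operatorname{diag}(\widetilde{\mathbf w})$, which is irreducible, row-stochastic, with stationary distribution $\boldsymbol\pi=\widetilde{\mathbf w}\circ\widetilde{\mathbf z}$ and $\pi_iK_{ij}=\pi_jK_{ji}$. $\beta$ is the logarithmic mean: $\beta(x,y)=\frac{x-y}{\log x-\log y}$ for $x\ne y$, $\beta(x,x)=x$ (so $\beta(Q_i,Q_j)(\log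 Q_j-\log Q_i)=Q_j-Q_i$). *)

(* Defs.v *)
From HB Require Import structures.
From mathcomp Require Import all_boot all_order all_algebra all_fingroup.
From mathcomp Require Import complex.
From mathcomp Require Import all_classical all_reals.
From mathcomp Require Import topology normedtype derive exp.
Set Implicit Arguments. Unset Strict Implicit. Unset Printing Implicit Defensive.
Import Order.TTheory GRing.Theory Num.Theory numFieldNormedType.Exports.
Local Open Scope ring_scope.

Section Defs.
Variable R : realType.

Definition col_stochastic m (M : 'M[R]_m) : Prop :=
  (forall i j, 0 <= M i j) /\ (forall j, \sum_i M i j = 1).

Definition irreducible_mx m (A : 'M[R]_m) : Prop :=
  forall i j, connect (fun a b => A a b != 0) i j.

Definition perm_sim m (s : 'S_m) (M : 'M[R]_m) : 'M[R]_m :=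
  \matrix_(i, j) M (s i) (s j).

Definition core n k (M : 'M[R]_(n + k)) (s : 'S_(n + k)) : 'M[R]_n :=
  ulsubmx (perm_sim s M).

(* M is (n+k,k)-admissible, witnessed by the permutation s:
   perm_sim s M = [[Mt, 0], [A, I_k]], Mt irreducible, A without zero row *)
Definition admissible_by n k (M : 'M[R]_(n + k)) (s : 'S_(n + k)) : Prop :=
  [/\ ursubmx (perm_sim s M) = 0,
      drsubmx (perm_sim s M) = 1%:M,
      irreducible_mx (ulsubmx (perm_sim s M)) &
      forall i : 'I_k, exists j : 'I_n, dlsubmx (perm_sim s M) i j != 0].

Definition is_spectral_radius m (A : 'M[R]_m) (r : R) : Prop :=
  let AC := map_mx (fun x : R => (x%:C)%C) A in
  (exists2 l : R[i], eigenvalue AC l & `|l| = (r%:C)%C) /\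
  (forall l : R[i], eigenvalue AC l -> `|l| <= (r%:C)%C).

Definition char_triple n (Mt : 'M[R]_n) (mu : R) (w z : 'I_n -> R) : Prop :=
  [/\ is_spectral_radius Mt mu,
      forall j, \sum_i w i * Mt i j = mu * w j,
      forall i, \sum_j Mt i j * z j = mu * z i,
      (forall i, 0 < w i) /\ (forall i, 0 < z i) &
      \sum_i w i = 1 /\ \sum_i w i * z i = 1].

Definition micro_reversible n (Mt : 'M[R]_n) (w z : 'I_n -> R) : Prop :=
  forall i j, w i * Mt i j * z j = w j * Mt j i * z i.

(* Q-process kernel K = mu^-1 diag(w)^-1 Mt^T diag(w) *)
Definition qkernel n (Mt : 'M[R]_n) (mu : R) (w : 'I_n -> R) : 'M[R]_n :=
  \matrix_(i, j) (mu^-1 * (w i)^-1 * Mt j i * w j).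

Definition stat_pi n (w z : 'I_n -> R) : 'I_n -> R := fun i => w i * z i.

Definition logmean (x y : R) : R :=
  if x == y then x else (x - y) / (ln x - ln y).

Definition Gphi n (phi : R -> R) (pi : 'I_n -> R) (Q : 'I_n -> R) : R :=
  \sum_i phi (Q i) * pi i.

Definition normpi2 n (pi : 'I_n -> R) (a : 'I_n -> R) : R :=
  \sum_i a i ^+ 2 * pi i.

Definition convex_pos (phi : R -> R) : Prop :=
  forall x y t : R, 0 < x -> 0 < y -> 0 <= t <= 1 ->
    phi (t * x + (1 - t) * y) <= t * phi x + (1 - t) * phi y.

(* Q(t) = q(t)/pi for t > 0: q(t) a probability vector, Q(t) > 0 (so that
   log Q makes sense) and dQ/dt = (K - I) Q *)
Definition is_Qsolution n (K : 'M[R]_n) (pi : 'I_n -> R)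
    (Q : R -> 'I_n -> R) : Prop :=
  [/\ forall t : R, 0 < t -> (forall i, 0 <= Q t i * pi i) /\
                          \sum_i Q t i * pi i = 1,
      forall t : R, 0 < t -> forall i, 0 < Q t i &
      forall t : R, 0 < t -> forall i,
        is_derive t (1 : R) (fun s : R => Q s i)
          (\sum_j (K i j - (i == j)%:R) * Q t j)].

Definition loc_strongly_convex (phi : R -> R) : Prop :=
  (forall x : R, 0 < x -> derivable (derive1 phi) x (1 : R)) /\
  forall Mb : R, 0 < Mb -> exists2 c : R, 0 < c &
    forall x : R, 0 < x -> x <= Mb -> c <= derive1 (derive1 phi) x.

End Defs.

(* Main.v *)
Require Import Defs.
From HB Require Import structures.
From mathcomp Require Import all_boot all_order all_algebra all_fingroup.
From mathcomp Require Import complex.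
From mathcomp Require Import all_classical all_reals.
From mathcomp Require Import topology normedtype derive exp.
From mathcomp Require Import ring lra.
From mathcomp Require Import signed zify.
Import Order.TTheory GRing.Theory Num.Theory numFieldNormedType.Exports.
Local Open Scope ring_scope.
Local Open Scope classical_set_scope.
Set Implicit Arguments. Unset Strict Implicit.

Section S.
Variable R : realType.

Lemma der_cvg (f : R -> R) x : derivable f x 1 ->
  (fun h : R => h^-1 * (f (h + x) - f x)) @ 0^' --> derive1 f x.
Proof.
move=> df; rewrite derive1E.
have := df; rewrite /derivable /derive.
have -> : (fun h : R => h^-1 *: ((f \o shift x) (h *: 1) - f x)) =
   (fun h : R => h^-1 * (f (h + x) - f x)).
  by apply: funext => h /=; rewrite [h *: 1]mulr1.
by move/cvgP.
Qed.

Lemma cvg_dr (f : R -> R) (a l : R) : f @ a^' --> l -> f @ a^'+ --> l.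
Proof.
move=> H A /H /nbhs_ballP [_ /posnumP[e] xe_A].
by exists e%:num => //= y xe_y /gt_eqF/negbT/xe_A; exact.
Qed.

Lemma cvg_dl (f : R -> R) (a l : R) : f @ a^' --> l -> f @ a^'- --> l.
Proof.
move=> H A /H /nbhs_ballP [_ /posnumP[e] xe_A].
by exists e%:num => //= y xe_y /lt_eqF/negbT/xe_A; exact.
Qed.

Lemma slope_left (phi : R -> R) x y : convex_pos phi -> 0 < x -> x < y ->
  derivable phi x 1 -> derive1 phi x <= (phi y - phi x) / (y - x).
Proof.
move=> cv x0 xy dx.
have := cvg_dr (der_cvg dx).
move/cvgr_to_le; apply.
near=> h.
have h0 : 0 < h by near: h; exact: nbhs_right_gt.
have hy : h < y - x by near: h; apply: nbhs_right_lt; rewrite subr_gt0.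
have yx0 : 0 < y - x by rewrite subr_gt0.
set t := h / (y - x).
have t01 : 0 <= t <= 1.
  apply/andP; split; first by rewrite divr_ge0 // ltW.
  by rewrite ler_pdivrMr // mul1r ltW.
have := cv y x t (lt_trans x0 xy) x0 t01.
have -> : t * y + (1 - t) * x = h + x.
  by rewrite /t; field; rewrite gt_eqF.
move=> H.
have E : t * (phi y - phi x) = h * ((phi y - phi x) / (y - x)).
  by rewrite /t; field; rewrite gt_eqF.
rewrite -(ler_pM2l h0) mulrA mulfV ?lt0r_neq0 // mul1r -E; lra.
Unshelve. all: by end_near.
Qed.

Lemma slope_right (phi : R -> R) x y : convex_pos phi -> 0 < x -> x < y ->
  derivable phi y 1 -> (phi y - phi x) / (y - x) <= derive1 phi y.
Proof.
move=> cv x0 xy dy.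
have := cvg_dl (der_cvg dy).
move/cvgr_to_ge; apply.
near=> h.
have h0 : h < 0 by near: h; exact: nbhs_left_lt.
have hy : x - y < h by near: h; apply: nbhs_left_gt; rewrite subr_lt0.
have yx0 : 0 < y - x by rewrite subr_gt0.
set t := - h / (y - x).
have t01 : 0 <= t <= 1.
  apply/andP; split; first by rewrite divr_ge0 // ?oppr_ge0 ltW.
  by rewrite ler_pdivrMr // mul1r; lra.
have := cv x y t x0 (lt_trans x0 xy) t01.
have -> : t * x + (1 - t) * y = h + y.
  by rewrite /t; field; rewrite gt_eqF.
move=> H.
have E : t * (phi x - phi y) = h * ((phi y - phi x) / (y - x)).
  by rewrite /t; field; rewrite gt_eqF.
have -> : h^-1 * (phi (h + y) - phi y) = (- (phi (h + y) - phi y)) / (- h).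
  by rewrite invrN mulrNN mulrC.
rewrite ler_pdivlMr ?oppr_gt0 //; lra.
Unshelve. all: by end_near.
Qed.

Lemma deriv_mono (phi : R -> R) x y : convex_pos phi ->
  (forall x : R, 0 < x -> derivable phi x (1 : R)) -> 0 < x -> x <= y ->
  derive1 phi x <= derive1 phi y.
Proof.
move=> cv dp x0; rewrite le_eqVlt => /orP[/eqP -> //|xy].
apply: le_trans (slope_left cv x0 xy (dp _ x0)) _.
exact: slope_right cv x0 xy (dp _ (lt_trans x0 xy)).
Qed.

Lemma comp_der (phi f : R -> R) t df : derivable phi (f t) 1 ->
  is_derive t 1 f df -> is_derive t 1 (fun u => phi (f u)) (derive1 phi (f t) * df).
Proof.
move=> dp df'.
have dft : derivable f t 1 by case: df'.
have dc : derivable (phi \o f) t 1.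
  apply/derivable1_diffP; apply: differentiable_comp; exact/derivable1_diffP.
apply: DeriveDef; first exact: dc.
rewrite -derive1E (derive1_comp dft dp); congr (_ * _); rewrite derive1E; exact: (@derive_val _ _ _ _ _ _ _ df').
Qed.

Lemma G_der n (pi : 'I_n -> R) (phi : R -> R) (Q : R -> 'I_n -> R) t
  (dQ : 'I_n -> R) : (forall i, derivable phi (Q t i) 1) ->
  (forall i, is_derive t 1 (fun u => Q u i) (dQ i)) ->
  is_derive t 1 (fun u => Gphi phi pi (Q u))
     (\sum_i derive1 phi (Q t i) * dQ i * pi i).
Proof.
move=> dp dq.
have -> : (fun u => Gphi phi pi (Q u)) = \sum_(i < n) (fun u => phi (Q u i) * pi i).
  by rewrite fct_sumE; apply: funext => u; rewrite /Gphi.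
apply: is_derive_sum => i.
have := is_deriveZ (pi i) (comp_der (dp i) (dq i)).
have -> : (pi i \*: (fun u => phi (Q u i))) = (fun u => phi (Q u i) * pi i).
  by apply: funext => u /=; rewrite mulrC.
by rewrite /GRing.scale /= mulrC.
Qed.

Lemma logmean_ln (x y : R) : 0 < x -> 0 < y -> logmean x y * (ln y - ln x) = y - x.
Proof.
move=> x0 y0; rewrite /logmean; case: eqP => [-> | xy]; first by rewrite !subrr mulr0.
have lnxy : ln x - ln y != 0.
  rewrite subr_eq0; apply/eqP => /(ln_inj x0 y0); exact: xy.
have -> : ln y - ln x = - (ln x - ln y) by rewrite opprB.
by field.
Qed.

Lemma sc_bound0 (phi : R -> R) (c Mb a b : R) :
  (forall x, 0 < x -> derivable (derive1 phi) x 1) ->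
  (forall x, 0 < x -> x <= Mb -> c <= derive1 (derive1 phi) x) ->
  0 < a -> a < b -> b <= Mb ->
  c * (b - a) ^+ 2 <= (derive1 phi b - derive1 phi a) * (b - a).
Proof.
move=> dd cb a0 ab bM.
have H1 : forall x, x \in `]a, b[%R -> is_derive x 1 (derive1 phi) (derive1 (derive1 phi) x).
  move=> x xab; rewrite derive1E; apply: derivableP; apply: dd.
  by apply: lt_trans a0 _; rewrite (itvP xab).
have H2 : {within `[a, b], continuous (derive1 phi)}.
  apply: derivable_within_continuous => x xab; apply: dd.
  by apply: lt_le_trans a0 _; rewrite (itvP xab).
have [c0 c0ab ->] := MVT ab H1 H2.
have cc : c <= derive1 (derive1 phi) c0.
  apply: cb; first by apply: lt_trans a0 _; rewrite (itvP c0ab).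
  by apply: le_trans bM; rewrite ltW // (itvP c0ab).
have ba : 0 < b - a by rewrite subr_gt0.
rewrite expr2 mulrA ler_pM2r //; by rewrite ler_pM2r.
Qed.

Lemma sc_bound (phi : R -> R) (c Mb a b : R) :
  (forall x, 0 < x -> derivable (derive1 phi) x 1) ->
  (forall x, 0 < x -> x <= Mb -> c <= derive1 (derive1 phi) x) ->
  0 < a -> 0 < b -> a <= Mb -> b <= Mb ->
  c * (b - a) ^+ 2 <= (derive1 phi b - derive1 phi a) * (b - a).
Proof.
move=> dd cb a0 b0 aM bM.
case: (ltgtP a b) => [ab|ba|->]; first exact: (sc_bound0 dd cb a0 ab bM).
  have := sc_bound0 dd cb b0 ba aM.
  have -> : (a - b) ^+ 2 = (b - a) ^+ 2 by rewrite -sqrrN opprB.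
  by have -> : (derive1 phi a - derive1 phi b) * (a - b) =
     (derive1 phi b - derive1 phi a) * (b - a) by ring.
by rewrite !subrr expr2 !mulr0.
Qed.

Section Gen.
Variables (n : nat) (K : 'M[R]_n) (pi : 'I_n -> R).
Hypothesis Kge0 : forall i j, 0 <= K i j.
Hypothesis Krow : forall i, \sum_j K i j = 1.
Hypothesis Ksym : forall i j, pi i * K i j = pi j * K j i.

Lemma dQ_eq (q : 'I_n -> R) i :
  \sum_j (K i j - (i == j)%:R) * q j = \sum_j K i j * (q j - q i).
Proof.
under eq_bigr do rewrite mulrBl.
under [RHS]eq_bigr do rewrite mulrBr.
rewrite !sumrB -mulr_suml Krow mul1r; congr (_ - _).
rewrite (bigD1 i) //= eqxx mul1r big1 ?addr0 // => j /negbTE.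
by rewrite eq_sym => ->; rewrite mul0r.
Qed.

Lemma dissip (p q : 'I_n -> R) :
  \sum_i p i * (\sum_j K i j * (q j - q i)) * pi i =
  - (1/2) * \sum_i \sum_j (K i j * (p j - p i) * (q j - q i) * pi i).
Proof.
set T := LHS.
have T1 : T = \sum_i \sum_j pi i * K i j * p i * (q j - q i).
  rewrite /T; apply: eq_bigr => i _; rewrite mulrC mulrA mulr_sumr.
  apply: eq_bigr => j _; ring.
have T2 : T = \sum_i \sum_j pi i * K i j * p j * (q i - q j).
  rewrite T1 exchange_big /=; apply: eq_bigr => i _; apply: eq_bigr => j _.
  by rewrite Ksym.
have -> : \sum_i \sum_j (K i j * (p j - p i) * (q j - q i) * pi i) =
   - (\sum_i \sum_j pi i * K i j * p i * (q j - q i) +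
      \sum_i \sum_j pi i * K i j * p j * (q i - q j)).
  rewrite -big_split -sumrN /=; apply: eq_bigr => i _.
  rewrite -big_split -sumrN /=; apply: eq_bigr => j _; ring.
rewrite -T1 -T2; lra.
Qed.

Lemma jensen (a : 'I_n -> R) i :
  (\sum_j K i j * a j) ^+ 2 <= \sum_j K i j * a j ^+ 2.
Proof.
set m := \sum_j K i j * a j.
have H : 0 <= \sum_j K i j * (a j - m) ^+ 2.
  by apply: sumr_ge0 => j _; rewrite mulr_ge0 // sqr_ge0.
have E : forall m0, \sum_j K i j * (a j - m0) ^+ 2 =
   \sum_j K i j * a j ^+ 2 - 2 * m0 * (\sum_j K i j * a j) + m0 ^+ 2 * \sum_j K i j.
  move=> m0; rewrite !mulr_sumr -sumrB -big_split /=.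
  by apply: eq_bigr => j _; ring.
rewrite E Krow mulr1 -/m in H; lra.
Qed.

Lemma Dform (phi : R -> R) (q : 'I_n -> R) : (forall i, 0 < q i) ->
  \sum_i \sum_j (K i j * logmean (q i) (q j)
             * (derive1 phi (q j) - derive1 phi (q i))
             * (ln (q j) - ln (q i)) * pi i) =
  \sum_i \sum_j (K i j * (derive1 phi (q j) - derive1 phi (q i)) * (q j - q i) * pi i).
Proof.
move=> q0; apply: eq_bigr => i _; apply: eq_bigr => j _.
rewrite -(logmean_ln (q0 i) (q0 j)); ring.
Qed.

Lemma Dsum_ge0 (phi : R -> R) (q : 'I_n -> R) : (forall i, 0 < q i) ->
  (forall i, 0 <= pi i) -> convex_pos phi ->
  (forall x : R, 0 < x -> derivable phi x (1 : R)) ->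
  0 <= \sum_i \sum_j (K i j * (derive1 phi (q j) - derive1 phi (q i)) * (q j - q i) * pi i).
Proof.
move=> q0 pi0 cv dp; apply: sumr_ge0 => i _; apply: sumr_ge0 => j _.
have H : 0 <= (derive1 phi (q j) - derive1 phi (q i)) * (q j - q i).
  case: (leP (q i) (q j)) => h.
    by rewrite mulr_ge0 // subr_ge0 // deriv_mono.
  have -> : (derive1 phi (q j) - derive1 phi (q i)) * (q j - q i) =
    (derive1 phi (q i) - derive1 phi (q j)) * (q i - q j) by ring.
  by rewrite mulr_ge0 // subr_ge0 // ?deriv_mono // ltW.
by rewrite mulr_ge0 // -mulrA mulr_ge0.
Qed.

End Gen.

End S.

Theorem lemma5 (R : realType) (n k : nat) (M : 'M[R]_(n + k))
    (s : 'S_(n + k)) (mu : R) (w z : 'I_n -> R) (phi : R -> R) :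
  (0 < k)%N -> (k < (n + k).-1 - 1)%N ->
  col_stochastic M ->
  admissible_by M s ->
  char_triple (core M s) mu w z ->
  micro_reversible (core M s) w z ->
  (forall x : R, 0 < x -> derivable phi x (1 : R)) ->
  convex_pos phi ->
  let K := qkernel (core M s) mu w in
  let pi := stat_pi w z in
  (* dissipation identity and sign *)
  (forall Q : R -> 'I_n -> R, is_Qsolution K pi Q ->
     forall t : R, 0 < t ->
     let D := - (1 / 2) * \sum_i \sum_j
          (K i j * logmean (Q t i) (Q t j)
             * (derive1 phi (Q t j) - derive1 phi (Q t i))
             * (ln (Q t j) - ln (Q t i)) * pi i) in
     is_derive t (1 : R) (fun u : R => Gphi phi pi (Q u)) D /\ D <= 0) /\
  (* local strong convexity gives a quantitative bound, C independent of Q, t *)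
  (loc_strongly_convex phi ->
     exists2 C : R, 0 < C &
       forall Q : R -> 'I_n -> R, is_Qsolution K pi Q ->
       forall t : R, 0 < t ->
         derive1 (fun u : R => Gphi phi pi (Q u)) t
           <= - C * normpi2 pi (fun i => derive1 (fun u : R => Q u i) t)
         /\ - C * normpi2 pi (fun i => derive1 (fun u : R => Q u i) t) <= 0) /\
  (* nonnegativity of G_phi *)
  ((forall x : R, 0 <= x -> x - 1 <= phi x) ->
     forall Q : R -> 'I_n -> R, is_Qsolution K pi Q ->
     forall t : R, 0 < t -> 0 <= Gphi phi pi (Q t)).
Proof.

move=> k0 kn [Mge0 Msum] [_ _ irr _] [_ wM Mz [w0 z0] [wsum wz1]] mr dphi cv K pi.
have n2 : (2 <= n)%N by lia.
set Mt := core M s.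
have Mt0 : forall i j, 0 <= Mt i j.
  by move=> i j; rewrite /Mt /core /perm_sim !mxE.
have n0 : (0 < n)%N by lia.
pose i0 := Ordinal n0.
pose i1 := Ordinal n2.
have i01 : i0 != i1 by rewrite -val_eqE.
have mu0 : 0 <= mu.
  have := wM i0; have : 0 <= \sum_i w i * Mt i i0.
    by apply: sumr_ge0 => i _; rewrite mulr_ge0 // ltW.
  move=> H1 H2; rewrite H2 in H1.
  by rewrite -(pmulr_lge0 _ (w0 i0)).
have mun0 : mu != 0.
  apply/eqP => mu00.
  have Mt00 : forall i j, Mt i j = 0.
    move=> i j; have := wM j; rewrite mu00 mul0r => /eqP.
    rewrite psumr_eq0; last by move=> a _; rewrite mulr_ge0 // ltW.
    move/allP => /(_ i (mem_index_enum i)) /=.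
    by rewrite mulf_eq0 (gt_eqF (w0 i)) /= => /eqP.
  have /connectP [p pth lst] := irr i0 i1.
  case: p pth lst => [_ /= e | a p /= /andP [ha _] _].
    by move: i01; rewrite e eqxx.
  by move: ha; rewrite [X in X != 0](Mt00 i0 a) eqxx.
have w0' : forall i, w i != 0 by move=> i; rewrite gt_eqF.
have Kge0 : forall i j, 0 <= K i j.
  move=> i j; rewrite /K /qkernel mxE.
  apply: mulr_ge0; last exact: ltW.
  apply: mulr_ge0; last exact: Mt0.
  by apply: mulr_ge0; rewrite invr_ge0 // ltW.
have Krow : forall i, \sum_j K i j = 1.
  move=> i; rewrite /K /qkernel.
  under eq_bigr do rewrite mxE -mulrA.
  rewrite -mulr_sumr.
  have -> : \sum_j Mt j i * w j = mu * w i.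
    by rewrite -wM; apply: eq_bigr => j _; rewrite mulrC.
  by field; rewrite mun0 w0'.
have Ksym : forall i j, pi i * K i j = pi j * K j i.
  move=> i j.
  have E1 : pi i * K i j = mu^-1 * (w j * Mt j i * z i).
    by rewrite /pi /stat_pi /K /qkernel mxE; field; rewrite ?mun0 ?w0'.
  have E2 : pi j * K j i = mu^-1 * (w i * Mt i j * z j).
    by rewrite /pi /stat_pi /K /qkernel mxE; field; rewrite ?mun0 ?w0'.
  by rewrite E1 E2 (mr i j).
have pi0 : forall i, 0 < pi i by move=> i; rewrite mulr_gt0.
have pisum : \sum_i pi i = 1 by [].
have Hder : forall Q, is_Qsolution K pi Q -> forall t : R, 0 < t ->
  is_derive t 1 (fun u => Gphi phi pi (Q u)) (-(1/2) * \sum_i \sum_j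
     (K i j * (derive1 phi (Q t j) - derive1 phi (Q t i)) * (Q t j - Q t i) * pi i)).
  move=> Q [_ Qpos Qder] t t0.
  apply: is_derive_eq (G_der pi (fun i => dphi _ (Qpos t t0 i)) (Qder t t0)) _.
  under eq_bigr do rewrite (dQ_eq Krow).
  exact: (dissip Ksym (fun i => derive1 phi (Q t i)) (Q t)).
split; [|split].
- move=> Q HQ t t0 D.
  have [_ Qpos _] := HQ.
  have -> : D = -(1/2) * \sum_i \sum_j
     (K i j * (derive1 phi (Q t j) - derive1 phi (Q t i)) * (Q t j - Q t i) * pi i).
    by rewrite /D (Dform K pi phi (Qpos t t0)).
  split; first exact: Hder.
  rewrite mulNr oppr_le0 mulr_ge0 //.
  apply: Dsum_ge0 => //; first exact: Qpos.
  by move=> i; rewrite ltW.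
- move=> [dd lsc].
  pose Mb := \sum_i (pi i)^-1.
  have Mbi : forall i, (pi i)^-1 <= Mb.
    move=> i; rewrite /Mb (bigD1 i) //= lerDl.
    by apply: sumr_ge0 => j _; rewrite invr_ge0 ltW.
  have Mb0 : 0 < Mb by apply: lt_le_trans (Mbi i0); rewrite invr_gt0.
  have [c c0 cb] := lsc Mb Mb0.
  exists (c / 2); first by rewrite divr_gt0.
  move=> Q HQ t t0; have [Qnn Qpos Qder] := HQ.
  have qM : forall i, Q t i <= Mb.
    move=> i; apply: le_trans (Mbi i).
    rewrite -div1r ler_pdivlMr //.
    have [Qn s1] := Qnn t t0.
    rewrite -s1 (bigD1 i) //= lerDl.
    by apply: sumr_ge0 => j _.
  have dQt : forall i, derive1 (fun u => Q u i) t = \sum_j K i j * (Q t j - Q t i).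
    move=> i; rewrite derive1E (@derive_val _ _ _ _ _ _ _ (Qder t t0 i)).
    exact: (dQ_eq Krow).
  rewrite derive1E (@derive_val _ _ _ _ _ _ _ (Hder Q HQ t t0)) /normpi2.
  have -> : \sum_i (derive1 (fun u => Q u i) t) ^+ 2 * pi i =
     \sum_i (\sum_j K i j * (Q t j - Q t i)) ^+ 2 * pi i.
    by apply: eq_bigr => i _; rewrite dQt.
  set S := \sum_i \sum_j _.
  set Y := \sum_i _.
  pose X := \sum_i (\sum_j K i j * (Q t j - Q t i) ^+ 2) * pi i.
  have Y0 : 0 <= Y by apply: sumr_ge0 => i _; rewrite mulr_ge0 ?sqr_ge0 // ltW.
  have YX : Y <= X.
    apply: ler_sum => i _; rewrite ler_pM2r //; exact: (jensen Kge0 Krow).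
  have XS : c * X <= S.
    rewrite /X mulr_sumr; apply: ler_sum => i _.
    rewrite mulr_suml mulr_sumr; apply: ler_sum => j _.
    have H := sc_bound dd cb (Qpos t t0 i) (Qpos t t0 j) (qM i) (qM j).
    have -> : c * (K i j * (Q t j - Q t i) ^+ 2 * pi i) =
      (K i j * pi i) * (c * (Q t j - Q t i) ^+ 2) by ring.
    have -> : K i j * (derive1 phi (Q t j) - derive1 phi (Q t i)) * (Q t j - Q t i) * pi i =
      (K i j * pi i) * ((derive1 phi (Q t j) - derive1 phi (Q t i)) * (Q t j - Q t i)) by ring.
    by apply: ler_wpM2l => //; rewrite mulr_ge0 // ltW.
  have cY : c * Y <= c * X by apply: ler_wpM2l => //; exact: ltW.
  split; first lra.
  by rewrite mulNr oppr_le0 mulr_ge0 // divr_ge0 // ltW.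
- move=> hx Q [Qnn Qpos _] t t0.
  rewrite /Gphi.
  have : \sum_i (Q t i - 1) * pi i <= \sum_i phi (Q t i) * pi i.
    apply: ler_sum => i _; rewrite ler_pM2r //; apply: hx; exact/ltW/Qpos.
  have -> : \sum_i (Q t i - 1) * pi i = \sum_i Q t i * pi i - \sum_i pi i.
    by rewrite -sumrB; apply: eq_bigr => i _; ring.
  by have [_ ->] := Qnn t t0; rewrite pisum subrr.
Qed.
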